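(* Let $h$ be an odd positive integer, $m=3h$, $e=3^h$. For $b\in\mathrm{GF}(3^m)^*$ let $N_{(b,0)}$ be the number of $y\in\mathrm{GF}(3^m)$ satisfying simultaneously $\mathrm{Tr}(y^{e+1}+y^2)=0$ and $\mathrm{Tr}(by^{e+1})=0$. Then for every $b\in\mathrm{GF}(3^m)^*$, $N_{(b,0)}\in\{3^{m-2},\ 3^{m-2}+2\cdot3^{2(h-1)},\ 3^{m-2}-2\cdot3^{2(h-1)}\}$.
   Context: $\mathrm{Tr}$ denotes the absolute trace from $\mathrm{GF}(3^m)$ onto $\mathrm{GF}(3)$. *)

(* Defs.v *)
From HB Require Import structures.
From mathcomp Require Import all_boot all_order all_algebra all_field.
Set Implicit Arguments. Unset Strict Implicit. Unset Printing Implicit Defensive.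
Import GRing.Theory.
Local Open Scope ring_scope.

(* Absolute trace of GF(3^m) onto GF(3): Tr(x) = sum_{i<m} x^(3^i).
   (Its values lie in the prime field GF(3) inside F.) *)
Definition Tr3 (F : finFieldType) (m : nat) (x : F) : F :=
  \sum_(i < m) x ^+ (3 ^ i)%N.

(* Main.v *)
Require Import Defs.
From HB Require Import structures.
From mathcomp Require Import all_boot all_order all_algebra all_field.
From mathcomp Require Import zify ring.
Set Implicit Arguments. Unset Strict Implicit. Unset Printing Implicit Defensive.
Import GRing.Theory.
Local Open Scope ring_scope.


Lemma frob3n (F : finFieldType) (H3 : 3 \in [pchar F]) (x y : F) (i : nat) :
  (x + y) ^+ (3 ^ i) = x ^+ (3 ^ i) + y ^+ (3 ^ i).
Proof.
apply: exprDn_pchar. rewrite pnatX. apply/orP; left. by rewrite pnatE.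
Qed.

Lemma TrD (F : finFieldType) (H3 : 3 \in [pchar F]) m (x y : F) :
  Tr3 m (x + y) = Tr3 m x + Tr3 m y.
Proof. rewrite /Tr3 -big_split /=; apply: eq_bigr => i _; exact: frob3n. Qed.

Lemma Tr0 (F : finFieldType) m : Tr3 m (0 : F) = 0.
Proof. by rewrite /Tr3 big1 // => i _; rewrite expr0n expn_eq0. Qed.

Lemma TrN (F : finFieldType) (H3 : 3 \in [pchar F]) m (x : F) :
  Tr3 m (- x) = - Tr3 m x.
Proof. by apply/eqP; rewrite -subr_eq0 opprK -TrD // addNr Tr0. Qed.

Lemma Tr_cube (F : finFieldType) (H3 : 3 \in [pchar F]) m (cardF : #|F| = (3 ^ m)%N)
  (x : F) : Tr3 m (x ^+ 3) = Tr3 m x.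
Proof.
rewrite /Tr3; case: m cardF => [|m] cardF; first by rewrite !big_ord0.
rewrite big_ord_recr big_ord_recl /= -exprM -expnS -cardF expf_card.
rewrite [in RHS]expn0 expr1 addrC; congr (_ + _); apply: eq_bigr => i _.
by rewrite -exprM -expnS.
Qed.

Lemma Tr_pow3 (F : finFieldType) (H3 : 3 \in [pchar F]) m (cardF : #|F| = (3 ^ m)%N)
  (x : F) j : Tr3 m (x ^+ (3 ^ j)) = Tr3 m x.
Proof.
elim: j => [|j IH]; first by rewrite expr1.
by rewrite expnSr exprM Tr_cube.
Qed.

Lemma Tr_cubeE (F : finFieldType) (H3 : 3 \in [pchar F]) m (cardF : #|F| = (3 ^ m)%N)
  (x : F) : Tr3 m x ^+ 3 = Tr3 m x.
Proof.
have -> : Tr3 m x ^+ 3 = pFrobenius_aut H3 (Tr3 m x) by rewrite pFrobenius_autE.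
rewrite /Tr3 rmorph_sum /= -[RHS](Tr_cube H3 cardF x) /Tr3.
by apply: eq_bigr => i _; rewrite pFrobenius_autE exprAC.
Qed.

Lemma cube_eq (F : finFieldType) (t : F) : t ^+ 3 = t -> [\/ t = 0, t = 1 | t = -1].
Proof.
move=> ht.
have : t * (t - 1) * (t + 1) = 0.
  have -> : t * (t - 1) * (t + 1) = t ^+ 3 - t by ring.
  by rewrite ht subrr.
move/eqP; rewrite !mulf_eq0 subr_eq0 addr_eq0 => /orP[/orP[]|] /eqP ->.
- by constructor 1. - by constructor 2. - by constructor 3.
Qed.

Lemma Tr_val (F : finFieldType) (H3 : 3 \in [pchar F]) m (cardF : #|F| = (3 ^ m)%N)
  (x : F) : [\/ Tr3 m x = 0, Tr3 m x = 1 | Tr3 m x = -1].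
Proof. exact/cube_eq/Tr_cubeE. Qed.

Lemma three0 (F : finFieldType) (H3 : 3 \in [pchar F]) : 3%:R = 0 :> F.
Proof. exact: pcharf0. Qed.

Lemma two_neq0 (F : finFieldType) (H3 : 3 \in [pchar F]) : 2%:R != 0 :> F.
Proof.
apply/negP => /eqP h2.
have : (1 : F) + 2%:R = 0 by rewrite -(natrD F 1 2) three0.
rewrite h2 addr0.
by move/eqP; rewrite oner_eq0.
Qed.

Lemma one_neq_m1 (F : finFieldType) (H3 : 3 \in [pchar F]) : (1 : F) != -1.
Proof. by rewrite -subr_eq0 opprK -(natrD F 1 1) two_neq0. Qed.

Lemma card_roots_lt (F : finFieldType) (p : {poly F}) (A : {set F}) :
  p != 0 -> (forall x, x \in A -> root p x) -> (#|A| < size p)%N.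
Proof.
move=> p0 hA; rewrite cardE; apply: max_poly_roots => //; last exact: enum_uniq.
by apply/allP => x; rewrite mem_enum; exact: hA.
Qed.

Lemma size_coef_le (F : finFieldType) (p : {poly F}) n :
  (forall j, (n < j)%N -> p`_j = 0) -> (size p <= n.+1)%N.
Proof. by move=> h; apply/leq_sizeP => j hj; apply: h. Qed.

Lemma Tr_poly (F : finFieldType) m (x : F) :
  (\sum_(i < m) 'X^(3 ^ i) : {poly F}).[x] = Tr3 m x.
Proof. by rewrite horner_sum; apply: eq_bigr => i _; rewrite hornerXn. Qed.

Lemma Tr_exists1 (F : finFieldType) (H3 : 3 \in [pchar F]) m (cardF : #|F| = (3 ^ m)%N)
  (m0 : (0 < m)%N) : exists x : F, Tr3 m x = 1.
Proof.
pose P : {poly F} := \sum_(i < m) 'X^(3 ^ i).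
have P0 : P != 0.
  apply/eqP => /(congr1 (fun q : {poly F} => q`_1)).
  rewrite coef0 /P coef_sum (bigD1 (Ordinal m0)) //= big1 ?addr0.
    by rewrite coefXn expn0 eqxx; apply/eqP; rewrite oner_eq0.
  move=> i hi; rewrite coefXn.
  have : (3 ^ i)%N != 1%N.
    move: hi; case: i => [[|k] hk] hi.
      by exfalso; move: hi; rewrite (_ : Ordinal hk = Ordinal m0) ?eqxx //; exact/val_inj.
    by rewrite /= expnS; apply/eqP => h1; have := expn_gt0 3 k; lia.
  by rewrite eq_sym => /negbTE ->.
have Psz : (size P <= (3 ^ m.-1).+1)%N.
  apply: size_coef_le => j hj; rewrite /P coef_sum big1 // => i _.
  rewrite coefXn; case: eqP => // hij; exfalso.
  move: hj; rewrite hij ltnNge leq_exp2l // -ltnS prednK //.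
  by rewrite ltn_ord.
have [x hx] : exists x : F, Tr3 m x != 0.
  apply/existsP; rewrite -negb_forall; apply/negP => /forallP hall.
  have := @card_roots_lt F P [set: F] P0.
  have H : (forall x : F, x \in [set: F] -> root P x).
    by move=> x _; rewrite /root Tr_poly; exact: hall.
  move/(_ H); rewrite cardsT cardF => hlt.
  have := leq_trans hlt Psz; rewrite ltnS leqNgt; move/negP; apply.
  by rewrite -(prednK m0) expnS /= ltn_Pmull // expn_gt0.
case: (Tr_val H3 cardF x) => hv; first by rewrite hv eqxx in hx.
  by exists x.
by exists (- x); rewrite TrN // hv opprK.
Qed.

Lemma card_sum (T : finType) (P : pred T) :
  #|[set x | P x]| = (\sum_(x : T) (P x : nat))%N.
Proof.
rewrite -sum1_card big_mkcond /=; apply: eq_bigr => x _.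
by rewrite inE; case: (P x).
Qed.

Lemma neq01 (F : finFieldType) (H3 : 3 \in [pchar F]) :
  ((0 : F) == 1) = false /\ ((0 : F) == -1) = false /\ ((1 : F) == 0) = false /\
      ((-1 : F) == 0) = false /\ ((1 : F) == -1) = false /\ ((-1 : F) == 1) = false.
Proof.
have h1 := one_neq_m1 H3.
do ! split; apply/negbTE; rewrite // ?oner_eq0 ?oppr_eq0 ?oner_eq0 //.
- by rewrite eq_sym oner_eq0.
- by rewrite eq_sym oppr_eq0 oner_eq0.
- by rewrite eq_sym.
Qed.

Lemma sum_group3 (T : finType) (F : finFieldType) (H3 : 3 \in [pchar F])
  (g : T -> F) (hg : forall x, [\/ g x = 0, g x = 1 | g x = -1]) (G : F -> nat) :
  (\sum_(x : T) G (g x) = #|[set x | g x == 0%R]| * G 0%R + #|[set x | g x == 1%R]| * G 1%R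
     + #|[set x | g x == (-1)%R]| * G (-1)%R)%N.
Proof.
have [n01 [n0m [n10 [nm0 [n1m nm1]]]]] := neq01 H3.
rewrite !card_sum !big_distrl -!big_split /=; apply: eq_bigr => x _.
by case: (hg x) => ->; rewrite ?eqxx ?n01 ?n0m ?n10 ?nm0 ?n1m ?nm1 /=; lia.
Qed.

Lemma card_split3 (T : finType) (F : finFieldType) (H3 : 3 \in [pchar F])
  (g : T -> F) (hg : forall x, [\/ g x = 0, g x = 1 | g x = -1]) :
  #|T| = (#|[set x | g x == 0%R]| + #|[set x | g x == 1%R]| + #|[set x | g x == (-1)%R]|)%N.
Proof.
have := sum_group3 H3 hg (fun _ => 1%N); rewrite !muln1 => <-.
by rewrite sum1_card.
Qed.

Lemma Tr_fib (F : finFieldType) (H3 : 3 \in [pchar F]) m (cardF : #|F| = (3 ^ m)%N)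
  (m0 : (0 < m)%N) (a t : F) : a != 0 -> [\/ t = 0, t = 1 | t = -1] ->
  (3 * #|[set z | Tr3 m (z * a)%R == t]|)%N = (3 ^ m)%N.
Proof.
move=> a0 ht.
have [x0 hx0] := Tr_exists1 H3 cardF m0.
pose x1 := x0 / a.
have hx1 : Tr3 m (x1 * a) = 1 by rewrite /x1 mulfVK.
have fibeq : forall t, [\/ t = 0, t = 1 | t = -1] ->
    #|[set z | Tr3 m (z * a) == t]| = #|[set z | Tr3 m (z * a) == 0]|.
  move=> s hs.
  have hw : Tr3 m ((s * x1) * a) = s.
    case: hs => ->; rewrite ?mul0r ?Tr0 ?mul1r ?hx1 //.
    by rewrite mulN1r mulNr TrN // hx1.
  have -> : [set z | Tr3 m (z * a) == s] = [set z + s * x1 | z in [set z | Tr3 m (z * a) == 0]].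
    apply/setP => z; rewrite inE; apply/idP/imsetP.
      move=> /eqP hz; exists (z - s * x1); last by rewrite subrK.
      by rewrite inE mulrBl TrD // TrN // hz hw subrr.
    move=> [z0]; rewrite inE => /eqP hz0 ->.
    by rewrite mulrDl TrD // hz0 hw add0r.
  by rewrite card_imset //; exact: addIr.
have hg : forall z, [\/ Tr3 m (z * a) = 0, Tr3 m (z * a) = 1 | Tr3 m (z * a) = -1].
  by move=> z; exact: Tr_val.
have E := card_split3 H3 hg; cbv beta in E; move: E; rewrite cardF.
rewrite (fibeq 1); last by constructor 2.
rewrite (fibeq (-1)); last by constructor 3.
rewrite (fibeq t ht) => ->; rewrite !mulSn mul0n addn0 addnA. done.
Qed.

Lemma int_core (n0 n1 n2 P r : nat) :
  P = (n0 + n1 + n2)%N -> (3 * (n0 * n0 + n1 * n1 + n2 * n2) = P * P + 2 * P * r)%N ->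
  (2 * n0 * n1 + n2 * n2 = 2 * n0 * n2 + n1 * n1)%N ->
  (3 * n0 = P)%N \/ (((3 * n0)%:Z - P%:Z) ^+ 2 = (4 * P * r)%:Z)%R.
Proof.
move=> E1 E2 E3.
have E3' : ((n1%:Z - n2%:Z) * (2 * n0%:Z - n1%:Z - n2%:Z) = 0)%R by lia.
move/eqP: E3'; rewrite mulf_eq0 => /orP[/eqP h|/eqP h].
  right; have e12 : n1 = n2 by lia.
  subst n2 P; rewrite expr2; nia.
by left; lia.
Qed.

Lemma two_eq (F : finFieldType) (H3 : 3 \in [pchar F]) : (2%:R : F) = -1.
Proof. by apply/eqP; rewrite -subr_eq0 opprK -(natrD F 2 1) three0. Qed.

Lemma one_one (F : finFieldType) (H3 : 3 \in [pchar F]) : (1 + 1 : F) = -1.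
Proof. by rewrite -(natrD F 1 1) two_eq. Qed.

Lemma eq_addsub (F : finFieldType) (a b t : F) : (a + b == t) = (b == t - a).
Proof. by rewrite [in RHS]eq_sym subr_eq [b + a]addrC eq_sym. Qed.

Lemma qform_pairs (F : finFieldType) (H3 : 3 \in [pchar F]) m (cardF : #|F| = (3 ^ m)%N)
  (m0 : (0 < m)%N) (Q L : F -> F)
  (hQv : forall y, [\/ Q y = 0, Q y = 1 | Q y = -1])
  (hB : forall y z, Q (y + z) = Q y + Q z + Tr3 m (z * L y))
  (hN : forall y, Q (- y) = Q y) :
  (3 * (#|[set y | Q y == 0%R]| * #|[set y | Q y == 0%R]| + #|[set y | Q y == 1%R]| * #|[set y | Q y == 1%R]|
     + #|[set y | Q y == (-1)%R]| * #|[set y | Q y == (-1)%R]|) =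
   3 ^ m * 3 ^ m + 2 * 3 ^ m * #|[set y | L y == 0%R]|)%N.
Proof.
have Q00 : Q 0 = 0.
  have := hB 0 0; rewrite mul0r Tr0 addr0 addr0 => h.
  by apply: (@addrI _ (Q 0)); rewrite -h addr0.
have Qk : forall w, L w = 0 -> Q w = 0.
  move=> w hw; have := hB w (- w); rewrite hw mulr0 Tr0 addr0 subrr hN Q00 => /esym/eqP.
  by rewrite -mulr2n -mulr_natr mulf_eq0 (negbTE (two_neq0 H3)) orbF => /eqP.
pose D := (\sum_(y : F) \sum_(z : F) ((Q y == Q z) : nat))%N.
have D1 : D = (#|[set y | Q y == 0%R]| * #|[set y | Q y == 0%R]| + #|[set y | Q y == 1%R]| * #|[set y | Q y == 1%R]|
     + #|[set y | Q y == (-1)%R]| * #|[set y | Q y == (-1)%R]|)%N.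
  rewrite /D (eq_bigr (fun y => #|[set z | Q z == Q y]|)); last first.
    by move=> y _; rewrite card_sum; apply: eq_bigr => z _; rewrite eq_sym.
  exact: (sum_group3 H3 hQv (fun t => #|[set z | Q z == t]|)).
have D2 : D = (\sum_(w : F) #|[set z | Tr3 m (z * L w)%R == (- Q w)%R]|)%N.
  rewrite /D exchange_big /=.
  rewrite (eq_bigr (fun z => \sum_(w : F) ((Q (z + w)%R == Q z) : nat))%N); last first.
    by move=> z _; rewrite (reindex_inj (addrI z)).
  rewrite exchange_big /=; apply: eq_bigr => w _; rewrite card_sum; apply: eq_bigr => z _.
  rewrite addrC hB.
  have -> : Q w + Q z + Tr3 m (z * L w) = Q z + (Tr3 m (z * L w) - - Q w) by rewrite opprK; ring.
  by rewrite -{2}[Q z]addr0 (inj_eq (addrI _)) subr_eq0.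
have D3 : forall w, (3 * #|[set z | Tr3 m (z * L w)%R == (- Q w)%R]| =
     3 ^ m + 2 * 3 ^ m * ((L w == 0%R) : nat))%N.
  move=> w; case: eqP => hw.
    rewrite hw Qk // oppr0.
    have -> : [set z | Tr3 m (z * 0) == 0] = [set: F].
      by apply/setP => z; rewrite !inE mulr0 Tr0 eqxx.
    by rewrite cardsT cardF /=; lia.
  rewrite Tr_fib //; first by rewrite /=; lia.
    exact/eqP.
  by case: (hQv w) => ->; rewrite ?oppr0 ?opprK; [constructor 1|constructor 3|constructor 2].
rewrite -D1 D2 big_distrr /= (eq_bigr _ (fun w _ => D3 w)) big_split /= sum_nat_const.
by rewrite cardT -cardE cardF -big_distrr /= -card_sum.
Qed.

Lemma char3_lin (F : finFieldType) (H3 : 3 \in [pchar F]) (x : F) : x + x + x = 0.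
Proof. by rewrite -[x + x]mulr2n -mulrSr -mulr_natl (three0 H3) mul0r. Qed.

Lemma qform_M (F : finFieldType) (H3 : 3 \in [pchar F]) m (Q L : F -> F)
  (hQv : forall y, [\/ Q y = 0, Q y = 1 | Q y = -1])
  (hB : forall y z, Q (y + z) = Q y + Q z + Tr3 m (z * L y))
  (hN : forall y, Q (- y) = Q y) :
  (2 * #|[set y | Q y == 0%R]| * #|[set y | Q y == 1%R]| + #|[set y | Q y == (-1)%R]| * #|[set y | Q y == (-1)%R]|
   = 2 * #|[set y | Q y == 0%R]| * #|[set y | Q y == (-1)%R]| + #|[set y | Q y == 1%R]| * #|[set y | Q y == 1%R]|)%N.
Proof.
pose M t := (\sum_(y : F) \sum_(z : F) ((Q y + Q z == t)%R : nat))%N.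
have Mt : forall t, M t = (#|[set y | Q y == 0%R]| * #|[set z | Q z == (t - 0)%R]|
    + #|[set y | Q y == 1%R]| * #|[set z | Q z == (t - 1)%R]|
    + #|[set y | Q y == (-1)%R]| * #|[set z | Q z == (t - -1)%R]|)%N.
  move=> t; rewrite /M (eq_bigr (fun y => #|[set z | Q z == (t - Q y)%R]|)); last first.
    by move=> y _; rewrite card_sum; apply: eq_bigr => z _; rewrite eq_addsub.
  exact: (sum_group3 H3 hQv (fun s => #|[set z | Q z == (t - s)%R]|)).
have e1 : (1 - - 1 : F) = -1 by rewrite opprK (one_one H3).
have e2 : (-1 - 1 : F) = 1 by rewrite -opprD (one_one H3) opprK.
have Meq : M 1 = M (-1).
  pose phi (p : F * F) := (p.1 + p.2, p.1 - p.2).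
  pose psi (p : F * F) := (- (p.1 + p.2), p.2 - p.1).
  have phiK : cancel phi psi.
    case=> a c; rewrite /phi /psi /=; congr (_, _).
      apply/eqP; rewrite -subr_eq0.
      have -> : - (a + c + (a - c)) - a = - (a + a + a) by ring.
      by rewrite char3_lin // oppr0.
    apply/eqP; rewrite -subr_eq0.
    have -> : a - c - (a + c) - c = - (c + c + c) by ring.
    by rewrite char3_lin // oppr0.
  rewrite /M !pair_bigA /= (reindex_inj (can_inj phiK)) /=.
  apply: eq_bigr => [[a c]] _ /=.
  have -> : Q (a + c) + Q (a - c) = - (Q a + Q c).
    rewrite hB hB hN mulNr TrN //; apply/eqP; rewrite -subr_eq0 opprK.
    apply/eqP; have -> : Q a + Q c + Tr3 m (c * L a) + (Q a + Q c + - Tr3 m (c * L a)) + (Q a + Q c)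
       = (Q a + Q c) + (Q a + Q c) + (Q a + Q c) by ring.
    exact: char3_lin.
  by rewrite eqr_oppLR.
move: Meq; rewrite !Mt !subr0 e1 e2 !subrr.
set n0 := #|[set y | Q y == 0%R]|; set n1 := #|[set y | Q y == 1%R]|; set n2 := #|[set y | Q y == (-1)%R]|.
lia.
Qed.

Lemma qform (F : finFieldType) (H3 : 3 \in [pchar F]) m (cardF : #|F| = (3 ^ m)%N)
  (m0 : (0 < m)%N) (Q L : F -> F)
  (hQv : forall y, [\/ Q y = 0, Q y = 1 | Q y = -1])
  (hB : forall y z, Q (y + z) = Q y + Q z + Tr3 m (z * L y))
  (hN : forall y, Q (- y) = Q y) :
  (3 * #|[set y | Q y == 0%R]| = 3 ^ m)%N \/
  (((3 * #|[set y | Q y == 0%R]|)%:Z - (3 ^ m)%:Z) ^+ 2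
     = (4 * 3 ^ m * #|[set y | L y == 0%R]|)%:Z)%R.
Proof.
apply: (int_core (n1 := #|[set y | Q y == 1%R]|) (n2 := #|[set y | Q y == (-1)%R]|)).
- by rewrite -cardF; exact: card_split3.
- exact: qform_pairs.
- exact: qform_M.
Qed.

Definition Qf (F : finFieldType) m e (c u : F) (y : F) :=
  Tr3 m (c * y ^+ e.+1 + u * y ^+ 2).
Definition Lf (F : finFieldType) e (c u : F) (y : F) :=
  c * y ^+ e + (c * y) ^+ (e * e) + 2%:R * u * y.

Lemma eee h : (3 ^ h * 3 ^ h * 3 ^ h = 3 ^ (3 * h))%N.
Proof. by rewrite -!expnD; have -> : (3 * h = h + h + h)%N by lia. Qed.

Lemma powe3 (F : finFieldType) h (cardF : #|F| = (3 ^ (3 * h))%N) (x : F) :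
  x ^+ (3 ^ h * 3 ^ h * 3 ^ h) = x.
Proof. by rewrite eee -cardF expf_card. Qed.

Lemma Qf_hyps (F : finFieldType) (H3 : 3 \in [pchar F]) h
  (cardF : #|F| = (3 ^ (3 * h))%N) (c u : F) :
  let m := (3 * h)%N in let e := (3 ^ h)%N in
  [/\ forall y, [\/ Qf m e c u y = 0, Qf m e c u y = 1 | Qf m e c u y = -1],
      forall y z, Qf m e c u (y + z) = Qf m e c u y + Qf m e c u z + Tr3 m (z * Lf e c u y)
    & forall y, Qf m e c u (- y) = Qf m e c u y].
Proof.
move=> m e; split.
- by move=> y; exact: Tr_val.
- move=> y z; rewrite /Qf /Lf.
  have hs : (y + z) ^+ e.+1 = (y ^+ e + z ^+ e) * (y + z) by rewrite exprSr frob3n.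
  have hT : Tr3 m (c * y * z ^+ e) = Tr3 m (z * (c * y) ^+ (e * e)).
    rewrite -[in LHS](Tr_pow3 H3 cardF _ (2 * h)).
    have -> : (3 ^ (2 * h) = e * e)%N by rewrite /e -expnD; have -> : (2 * h = h + h)%N by lia.
    by rewrite !exprMn -!exprM mulnA (powe3 cardF z) mulrC.
  rewrite hs.
  have -> : c * ((y ^+ e + z ^+ e) * (y + z)) + u * (y + z) ^+ 2 =
     (c * y ^+ e.+1 + u * y ^+ 2) + (c * z ^+ e.+1 + u * z ^+ 2)
     + ((c * y ^+ e * z + 2%:R * u * y * z) + c * y * z ^+ e) by rewrite !exprSr; ring.
  have -> : z * (c * y ^+ e + (c * y) ^+ (e * e) + 2%:R * u * y) =
     (c * y ^+ e * z + 2%:R * u * y * z) + z * (c * y) ^+ (e * e) by ring.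
  by rewrite !TrD // hT addrA.
- move=> y; rewrite /Qf sqrrN exprNn -signr_odd /=.
  have -> : odd e = true by rewrite /e oddX orbT.
  by rewrite /= expr0 mul1r.
Qed.

Lemma fibre_bound (T : finType) (R : finType) (f : T -> R) k :
  (forall t, #|[set x | f x == t]| <= k)%N -> (#|T| <= #|f @: [set: T]| * k)%N.
Proof.
move=> hk; rewrite -cardsT -sum1_card (partition_big_imset f) /=.
rewrite -sum_nat_const; apply: leq_sum => t _.
apply: leq_trans (hk t); rewrite card_sum big_mkcond /=; apply: leq_sum => x _.
by rewrite inE; case: (f x == t).
Qed.

Lemma K_le (F : finFieldType) e (e1 : (1 < e)%N) :
  (#|[set x : F | (x ^+ e)%R == x]| <= e)%N.
Proof.
pose P : {poly F} := 'X^e - 'X.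
have P0 : P != 0.
  apply/eqP => /(congr1 (fun q : {poly F} => q`_e)).
  rewrite coef0 /P coefB coefXn coefX eqxx.
  have -> : (e == 1%N) = false by apply/negbTE; rewrite neq_ltn e1 orbT.
  by rewrite subr0 => /eqP; rewrite oner_eq0.
have Psz : (size P <= e.+1)%N.
  apply: size_coef_le => j hj; rewrite /P coefB coefXn coefX.
  have -> : (j == e) = false by apply/negbTE; rewrite neq_ltn hj orbT.
  have -> : (j == 1%N) = false by apply/negbTE; rewrite neq_ltn (ltn_trans e1 hj) orbT.
  by rewrite subr0.
rewrite -ltnS; apply: leq_trans Psz; apply: card_roots_lt => // x.
by rewrite inE /root /P !hornerE subr_eq0.
Qed.

Lemma Tfib_le (F : finFieldType) e (e1 : (1 < e)%N) (t : F) :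
  (#|[set x : F | (x + x ^+ e + (x ^+ e) ^+ e)%R == t]| <= e * e)%N.
Proof.
pose P : {poly F} := 'X + 'X^e + 'X^(e * e) - t%:P.
have ee : (e < e * e)%N by rewrite -{1}[e]muln1 ltn_mul2l e1 andbT (ltn_trans _ e1).
have e0 : (0 < e)%N by apply: ltn_trans e1.
have P0 : P != 0.
  apply/eqP => /(congr1 (fun q : {poly F} => q`_(e * e))).
  rewrite coef0 /P coefB !coefD coefXn coefX coefXn coefC eqxx.
  have -> : (e * e == 1%N)%N = false by apply/negbTE; rewrite neq_ltn (ltn_trans e1 ee) orbT.
  have -> : (e * e == e)%N = false by apply/negbTE; rewrite neq_ltn ee orbT.
  have -> : (e * e == 0)%N = false by apply/negbTE; rewrite muln_eq0 negb_or -!lt0n e0.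
  by rewrite /= !mulr0n mulr1n !add0r subr0 => /eqP; rewrite oner_eq0.
have Psz : (size P <= (e * e).+1)%N.
  apply: size_coef_le => j hj; rewrite /P coefB !coefD coefXn coefX coefXn coefC.
  have -> : (j == e * e) = false by apply/negbTE; rewrite neq_ltn hj orbT.
  have -> : (j == e) = false by apply/negbTE; rewrite neq_ltn (ltn_trans ee hj) orbT.
  have -> : (j == 1%N) = false.
    by apply/negbTE; rewrite neq_ltn (ltn_trans (ltn_trans e1 ee) hj) orbT.
  have -> : (j == 0%N) = false by apply/negbTE; rewrite -lt0n (leq_ltn_trans _ hj).
  by rewrite add0r addr0 subr0.
rewrite -ltnS; apply: leq_trans Psz; apply: card_roots_lt => // x.
by rewrite inE /root /P !hornerE -exprM subr_eq0.
Qed.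

Lemma powe3' (F : finFieldType) h (cardF : #|F| = (3 ^ (3 * h))%N) (x : F) :
  ((x ^+ (3 ^ h)) ^+ (3 ^ h)) ^+ (3 ^ h) = x.
Proof. by rewrite -!exprM ?mulnA (powe3 cardF). Qed.

Lemma K_T_card (F : finFieldType) (H3 : 3 \in [pchar F]) h (h0 : (0 < h)%N)
  (cardF : #|F| = (3 ^ (3 * h))%N) :
  #|[set x : F | (x ^+ (3 ^ h))%R == x]| = (3 ^ h)%N /\
  #|[set x : F | (x + x ^+ (3 ^ h) + (x ^+ (3 ^ h)) ^+ (3 ^ h))%R == 0%R]| = (3 ^ h * 3 ^ h)%N.
Proof.
set e := (3 ^ h)%N.
have e1 : (1 < e)%N by rewrite /e -{1}(expn0 3) ltn_exp2l.
have e0 : (0 < e)%N by apply: ltn_trans e1.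
pose T (x : F) := x + x ^+ e + (x ^+ e) ^+ e.
have sD : forall x y : F, (x + y) ^+ e = x ^+ e + y ^+ e by move=> x y; exact: frob3n.
have TK : forall w, T w \in [set x : F | (x ^+ e)%R == x].
  move=> w; rewrite inE /T !sD (powe3' cardF).
  by rewrite addrC addrA.
have imT : T @: [set: F] \subset [set x : F | (x ^+ e)%R == x].
  by apply/subsetP => y /imsetP [z _ ->]; exact: TK.
have cF : #|F| = (e * e * e)%N by rewrite cardF /e eee.
have hK : #|[set x : F | (x ^+ e)%R == x]| = e.
  apply/eqP; rewrite eqn_leq K_le //=.
  have := fibre_bound (f := T) (k := (e * e)%N) (fun t => Tfib_le e1 t).
  rewrite cF => h1.
  have h2 := leq_trans h1 (leq_mul (subset_leq_card imT) (leqnn (e * e))).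
  have ee0 : (0 < e * e)%N by rewrite muln_gt0 e0.
  by rewrite -(leq_pmul2r ee0) mulnA.
split => //.
set ker := [set x : F | (x + x ^+ e + (x ^+ e) ^+ e)%R == 0%R].
have kle : (#|ker| <= e * e)%N by exact: Tfib_le.
have fibk : forall t, (#|[set x | T x == t]| <= #|ker|)%N.
  move=> t; case: (pickP [pred x | T x == t]) => [x0 /= hx0|hn]; last first.
    rewrite (_ : [set x | T x == t] = set0) ?cards0 //.
    by apply/setP => x; rewrite !inE; have := hn x; rewrite /= => ->.
  rewrite -(card_imset _ (addIr (- x0))); apply: subset_leq_card.
  apply/subsetP => y /imsetP [x]; rewrite inE => /eqP hx ->.
  rewrite inE.
  have -> : (x - x0) + (x - x0) ^+ e + ((x - x0) ^+ e) ^+ e = T x - T x0.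
    rewrite /T !sD.
    have sN : forall z : F, (- z) ^+ e = - z ^+ e.
      move=> z; apply/eqP; rewrite -subr_eq0 opprK -sD addNr expr0n.
      by rewrite eqn0Ngt e0.
    rewrite !sN; ring.
  by rewrite hx (eqP hx0) subrr.
have := fibre_bound (f := T) fibk; rewrite cF => h1.
have h2 := leq_trans h1 (leq_mul (subset_leq_card imT) (leqnn #|ker|)).
rewrite hK in h2.
apply/eqP; rewrite eqn_leq kle /=.
by rewrite -(leq_pmul2l e0) mulnA.
Qed.

Lemma s_zero (F : finFieldType) e (e0 : (0 < e)%N) (a : F) : a = 0 -> a ^+ e = 0.
Proof. by move=> ->; rewrite expr0n eqn0Ngt e0. Qed.

Lemma ker_b0 (F : finFieldType) (H3 : 3 \in [pchar F]) h (h0 : (0 < h)%N)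
  (cardF : #|F| = (3 ^ (3 * h))%N) (b y : F) : b != 0 ->
  Lf (3 ^ h) b 0 y = 0 -> y = 0.
Proof.
set e := (3 ^ h)%N => b0.
have e0 : (0 < e)%N by rewrite expn_gt0.
have sD : forall x y : F, (x + y) ^+ e = x ^+ e + y ^+ e by move=> x z; exact: frob3n.
have s3 : forall x : F, ((x ^+ e) ^+ e) ^+ e = x by move=> x; exact: powe3'.
rewrite /Lf mulr0 mul0r addr0 exprM !exprMn => E1.
have E2 := s_zero e0 E1; rewrite sD !exprMn !s3 in E2.
have E3 := s_zero e0 E2; rewrite sD !exprMn !s3 in E3.
have : 2%:R * b * (b ^+ e) ^+ e * y = 0.
  have -> : 2%:R * b * (b ^+ e) ^+ e * y =
     - (b ^+ e * (b * y ^+ e + (b ^+ e) ^+ e * (y ^+ e) ^+ e)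
        - b * (((b ^+ e) ^+ e) * y + b ^+ e * y ^+ e)
        - (b ^+ e) ^+ e * (b ^+ e * (y ^+ e) ^+ e + b * y)) by ring.
  by rewrite E1 E2 E3 !mulr0 !subr0 oppr0.
move/eqP; rewrite !mulf_eq0 (negbTE (two_neq0 H3)) (negbTE b0) !expf_eq0 (negbTE b0).
by rewrite !andbF /= => /eqP.
Qed.

Lemma ker_11 (F : finFieldType) (H3 : 3 \in [pchar F]) h (h0 : (0 < h)%N)
  (cardF : #|F| = (3 ^ (3 * h))%N) (y : F) :
  Lf (3 ^ h) 1 1 y = 0 -> y = 0.
Proof.
set e := (3 ^ h)%N.
have e0 : (0 < e)%N by rewrite expn_gt0.
have sD : forall x y : F, (x + y) ^+ e = x ^+ e + y ^+ e by move=> x z; exact: frob3n.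
have s3 : forall x : F, ((x ^+ e) ^+ e) ^+ e = x by move=> x; exact: powe3'.
rewrite /Lf !mul1r mulr1 exprM (two_eq H3) mulN1r => E1.
have E2 := s_zero e0 E1; rewrite !sD s3 in E2.
have sN : forall z : F, (- z) ^+ e = - z ^+ e.
  move=> z; apply/eqP; rewrite -subr_eq0 opprK -sD addNr expr0n.
  by rewrite eqn0Ngt e0.
rewrite sN in E2.
have hy1 : y ^+ e = y.
  apply/eqP; rewrite -subr_eq0.
  have : 2%:R * (y ^+ e - y) = 0.
    have -> : 2%:R * (y ^+ e - y) = (y ^+ e + (y ^+ e) ^+ e + - y) - ((y ^+ e) ^+ e + y + - y ^+ e) by ring.
    by rewrite E1 E2 subrr.
  by move/eqP; rewrite mulf_eq0 (negbTE (two_neq0 H3)).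
move: E1; rewrite hy1 hy1 => E1.
have : y = y + y + - y by ring.
by rewrite E1.
Qed.

Lemma ker_c1 (F : finFieldType) (H3 : 3 \in [pchar F]) h (h0 : (0 < h)%N)
  (cardF : #|F| = (3 ^ (3 * h))%N) (c y : F) : 1 - c ^+ 2 != 0 -> y != 0 ->
  Lf (3 ^ h) c 1 y = 0 ->
  [set z | Lf (3 ^ h) c 1 z == 0] = [set mu * y | mu in [set x | x ^+ (3 ^ h) == x]].
Proof.
set e := (3 ^ h)%N => hc y0 hy.
have e0 : (0 < e)%N by rewrite expn_gt0.
have sD : forall x y : F, (x + y) ^+ e = x ^+ e + y ^+ e by move=> x z; exact: frob3n.
have s3 : forall x : F, ((x ^+ e) ^+ e) ^+ e = x by move=> x; exact: powe3'.
have sN : forall z : F, (- z) ^+ e = - z ^+ e.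
  move=> z; apply/eqP; rewrite -subr_eq0 opprK -sD addNr expr0n.
  by rewrite eqn0Ngt e0.
have LE : forall z, Lf e c 1 z = c * z ^+ e + (c ^+ e) ^+ e * (z ^+ e) ^+ e - z.
  by move=> z; rewrite /Lf exprM !exprMn (two_eq H3) mulr1 mulN1r.
have rel : forall z, Lf e c 1 z = 0 ->
    (1 - c ^+ 2) * z = ((c ^+ e) ^+ e + c * c ^+ e) * (z ^+ e) ^+ e.
  move=> z; rewrite LE => E1.
  have E2 := s_zero e0 E1; rewrite !sD sN !exprMn !s3 in E2.
  apply/eqP; rewrite -subr_eq0; apply/eqP.
  have -> : (1 - c ^+ 2) * z - ((c ^+ e) ^+ e + c * c ^+ e) * (z ^+ e) ^+ e =
     - ((c * z ^+ e + (c ^+ e) ^+ e * (z ^+ e) ^+ e - z)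
        + c * (c ^+ e * (z ^+ e) ^+ e + c * z - z ^+ e)) by ring.
  by rewrite E1 E2 mulr0 addr0 oppr0.
have ry := rel y hy.
set D := 1 - c ^+ 2 in hc ry rel.
set beta := (c ^+ e) ^+ e + c * c ^+ e in ry rel.
have y2 : (y ^+ e) ^+ e != 0 by rewrite !expf_eq0 (negbTE y0) !andbF.
have b0 : beta != 0.
  apply: contraNneq (mulf_neq0 hc y0) => hb.
  by rewrite ry hb mul0r.
apply/setP => z; rewrite inE; apply/idP/imsetP.
- move=> /eqP hz; have rz := rel z hz.
  exists (z / y); last by rewrite divfK.
  rewrite inE.
  have hmu : ((z / y) ^+ e) ^+ e = z / y.
    rewrite !exprMn !exprVn; apply/eqP; rewrite eqr_div // ?y2 //.
    apply/eqP; apply: (mulfI hc); apply: (mulfI b0).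
    have -> : beta * (D * ((z ^+ e) ^+ e * y)) = (beta * (z ^+ e) ^+ e) * (D * y) by ring.
    have -> : beta * (D * (z * (y ^+ e) ^+ e)) = (D * z) * (beta * (y ^+ e) ^+ e) by ring.
    by rewrite rz ry mulrC.
  by have := s3 (z / y); rewrite hmu => ->.
- move=> [mu]; rewrite inE => /eqP hmu ->.
  rewrite LE exprMn hmu exprMn hmu.
  have -> : c * (mu * y ^+ e) + (c ^+ e) ^+ e * (mu * (y ^+ e) ^+ e) - mu * y
      = mu * (c * y ^+ e + (c ^+ e) ^+ e * (y ^+ e) ^+ e - y) by ring.
  by rewrite -LE hy mulr0.
Qed.

Lemma ker_m1 (F : finFieldType) (H3 : 3 \in [pchar F]) h (h0 : (0 < h)%N)
  (cardF : #|F| = (3 ^ (3 * h))%N) :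
  #|[set z : F | Lf (3 ^ h) (-1) 1 z == 0]| = (3 ^ h * 3 ^ h)%N.
Proof.
have [_ <-] := K_T_card H3 h0 cardF.
apply: eq_card => z; rewrite !inE.
have odd_ee : odd (3 ^ h * 3 ^ h) by rewrite oddM oddX /= orbT.
rewrite /Lf (two_eq H3) mulr1 !mulN1r exprNn -signr_odd odd_ee expr1 mulN1r.
rewrite -exprM.
have -> : - z ^+ (3 ^ h) + - z ^+ (3 ^ h * 3 ^ h) + - z =
  - (z + z ^+ (3 ^ h) + z ^+ (3 ^ h * 3 ^ h)) by ring.
by rewrite oppr_eq0.
Qed.

Lemma det_zero (F : finFieldType) (H3 : 3 \in [pchar F]) h (h0 : (0 < h)%N)
  (cardF : #|F| = (3 ^ (3 * h))%N) (c y : F) : y != 0 ->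
  Lf (3 ^ h) c 1 y = 0 ->
  c ^+ 2 + (c ^+ (3 ^ h)) ^+ 2 + ((c ^+ (3 ^ h)) ^+ (3 ^ h)) ^+ 2
   + 2%:R * c * c ^+ (3 ^ h) * (c ^+ (3 ^ h)) ^+ (3 ^ h) - 1 = 0.
Proof.
set e := (3 ^ h)%N => y0.
have e0 : (0 < e)%N by rewrite expn_gt0.
have sD : forall x y : F, (x + y) ^+ e = x ^+ e + y ^+ e by move=> x z; exact: frob3n.
have s3 : forall x : F, ((x ^+ e) ^+ e) ^+ e = x by move=> x; exact: powe3'.
have sN : forall z : F, (- z) ^+ e = - z ^+ e.
  move=> z; apply/eqP; rewrite -subr_eq0 opprK -sD addNr expr0n.
  by rewrite eqn0Ngt e0.
rewrite /Lf exprM !exprMn (two_eq H3) mulr1 mulN1r => E1.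
have E2 := s_zero e0 E1; rewrite !sD sN !exprMn !s3 in E2.
have E3 := s_zero e0 E2; rewrite !sD sN !exprMn !s3 in E3.
set c1 := c ^+ e in E1 E2 E3 *; set c2 := c1 ^+ e in E1 E2 E3 *.
set y1 := y ^+ e in E1 E2 E3; set y2 := y1 ^+ e in E1 E2 E3.
have : (c ^+ 2 + c1 ^+ 2 + c2 ^+ 2 + 2%:R * c * c1 * c2 - 1) * y = 0.
  have -> : (c ^+ 2 + c1 ^+ 2 + c2 ^+ 2 + 2%:R * c * c1 * c2 - 1) * y =
    (1 - c1 ^+ 2) * (c * y1 + c2 * y2 + - y)
    + (c + c1 * c2) * (c1 * y2 + c * y + - y1)
    + (c * c1 + c2) * (c2 * y + c1 * y1 + - y2) by ring.
  by rewrite E1 E2 E3 !mulr0 !addr0.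
by move/eqP; rewrite mulf_eq0 (negbTE y0) orbF (two_eq H3) => /eqP.
Qed.

Lemma e_mod4 h : odd h -> exists q, (3 ^ h = 4 * q + 3)%N.
Proof.
move=> ho; exists ((3 ^ h) %/ 4)%N.
have : ((3 ^ h) %% 4 = 3)%N.
  have H : forall k, (3 ^ (k.*2.+1) %% 4 = 3)%N.
    elim=> // k IH; rewrite doubleS expnS expnS mulnA -modnMm.
    by rewrite IH.
  by rewrite -(odd_double_half h) ho add1n H.
by move=> hm; rewrite {1}(divn_eq (3 ^ h) 4) hm mulnC.
Qed.

Lemma not_both (F : finFieldType) (H3 : 3 \in [pchar F]) h (ho : odd h)
  (cardF : #|F| = (3 ^ (3 * h))%N) (b y y' : F) : y != 0 -> y' != 0 ->
  Lf (3 ^ h) (1 + b) 1 y = 0 -> Lf (3 ^ h) (1 - b) 1 y' = 0 -> False.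
Proof.
set e := (3 ^ h)%N => y0 y'0 hy hy'.
have h0 : (0 < h)%N by case: h ho {e hy hy' cardF}.
have e0 : (0 < e)%N by rewrite expn_gt0.
have sD : forall x y : F, (x + y) ^+ e = x ^+ e + y ^+ e by move=> x z; exact: frob3n.
have s3 : forall x : F, ((x ^+ e) ^+ e) ^+ e = x by move=> x; exact: powe3'.
have sN : forall z : F, (- z) ^+ e = - z ^+ e.
  move=> z; apply/eqP; rewrite -subr_eq0 opprK -sD addNr expr0n.
  by rewrite eqn0Ngt e0.
have d1 := det_zero H3 h0 cardF y0 hy.
have d2 := det_zero H3 h0 cardF y'0 hy'.
rewrite -/e !sD !sN !expr1n in d1 d2.
set b1 := b ^+ e in d1 d2; set b2 := b1 ^+ e in d1 d2.
set p := b + b1 + b2.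
have hp : p ^+ 2 = -1.
  have : 2%:R * (1 + p ^+ 2) = 0.
    have -> : 2%:R * (1 + p ^+ 2) =
      ((1 + b) ^+ 2 + (1 + b1) ^+ 2 + (1 + b2) ^+ 2 + 2%:R * (1 + b) * (1 + b1) * (1 + b2) - 1)
      + ((1 - b) ^+ 2 + (1 - b1) ^+ 2 + (1 - b2) ^+ 2 + 2%:R * (1 - b) * (1 - b1) * (1 - b2) - 1)
      - 3%:R * 2%:R by rewrite /p; ring.
    by rewrite d1 d2 (three0 H3) mul0r !subr0 addr0.
  move/eqP; rewrite mulf_eq0 (negbTE (two_neq0 H3)) /= addrC addr_eq0 => /eqP //.
have pe : p ^+ e = p by rewrite /p !sD /b2 /b1 s3 addrC addrA.
have [q hq] := e_mod4 ho.
have p4 : p ^+ 4 = 1 by rewrite (_ : 4 = 2 * 2)%N // exprM hp expr2 mulN1r opprK.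
have : p = - p.
  rewrite -{1}pe /e hq exprD exprM p4 expr1n mul1r.
  by rewrite (_ : 3 = 2 + 1)%N // exprD hp expr1 mulN1r.
move/eqP; rewrite -subr_eq0 opprK -mulr2n -mulr_natl mulf_eq0 (negbTE (two_neq0 H3)) /=.
move/eqP => p0; move: hp; rewrite p0 expr0n /= => /eqP.
by rewrite eq_sym oppr_eq0 oner_eq0.
Qed.

Lemma nonsq (X : int) j : odd j -> (X ^+ 2 = (4 * 3 ^ j)%:Z)%R -> False.
Proof.
move=> oj /(congr1 absz); rewrite abszX absz_nat => hX.
have hX0 : (0 < `|X|)%N.
  rewrite lt0n; apply/eqP => h0; move: hX; rewrite h0 exp0n //.
  by move=> /esym/eqP; rewrite muln_eq0 expn_eq0.
have := congr1 (logn 3) hX.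
rewrite lognX lognM // ?expn_gt0 // pfactorK //.
have -> : logn 3 4 = 0%N by [].
rewrite add0n => hj; move: oj; rewrite -hj; by rewrite oddM.
Qed.

Lemma X_cases (X : int) (r h : nat) : odd h ->
  [\/ r = 1%N, r = (3 ^ h)%N | r = (3 ^ h * 3 ^ h)%N] ->
  (X = 0 \/ X ^+ 2 = (4 * 3 ^ (3 * h) * r)%:Z)%R ->
  (X = 0)%R \/ (r = (3 ^ h)%N /\ (X = (2 * 3 ^ (2 * h))%:Z \/ X = - (2 * 3 ^ (2 * h))%:Z)%R).
Proof.
move=> ho hr [->|hX]; first by left.
right; case: hr => hr; rewrite hr ?muln1 in hX.
- by exfalso; apply: (nonsq (j := (3 * h)%N)) hX; rewrite oddM ho.
- split => //.
  have e4 : (4 * 3 ^ (3 * h) * 3 ^ h = (2 * 3 ^ (2 * h)) ^ 2)%N.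
    rewrite expnMn -expnM -mulnA -expnD; congr (_ * 3 ^ _)%N; lia.
  move: hX; rewrite e4 => hX.
  have ha : `|X|%N = (2 * 3 ^ (2 * h))%N.
    have := congr1 absz hX; rewrite abszX absz_nat => /eqP.
    by rewrite eqn_exp2r // => /eqP.
  case: X ha {hX} => n /= ha; first by left; rewrite ha.
  by right; rewrite -ha NegzE.
- exfalso; apply: (nonsq (X := X) (j := (5 * h)%N)); first by rewrite oddM ho.
  rewrite hX -expnD -mulnA -expnD.
  by have -> : (3 * h + (h + h) = 5 * h)%N by lia.
Qed.

Lemma Lf0 (F : finFieldType) e (e0 : (0 < e)%N) (c u : F) : Lf e c u 0 = 0.
Proof. by rewrite /Lf mulr0 !expr0n muln_eq0 eqn0Ngt e0 /= !mulr0 !addr0. Qed.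

Lemma ker_one (F : finFieldType) (L : F -> F) : L 0 = 0 ->
  #|[set y | L y == 0]| != 1%N -> exists2 y, y != 0 & L y = 0.
Proof.
move=> L0 hr; case: (pickP [pred y | (y != 0) && (L y == 0)]) => [y /andP [y0 /eqP hy]|hn].
  by exists y.
exfalso; move/negP: hr; apply.
rewrite (_ : [set y | L y == 0] = [set 0]) ?cards1 //.
apply/setP => y; rewrite !inE; have := hn y; rewrite /=.
by case: (y =P 0) => [->|_]; rewrite ?L0 ?eqxx //= => ->.
Qed.

Lemma ker_cases (F : finFieldType) (H3 : 3 \in [pchar F]) h (h0 : (0 < h)%N)
  (cardF : #|F| = (3 ^ (3 * h))%N) (c : F) :
  [\/ #|[set y | Lf (3 ^ h) c 1 y == 0]| = 1%N,
      #|[set y | Lf (3 ^ h) c 1 y == 0]| = (3 ^ h)%N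
    | #|[set y | Lf (3 ^ h) c 1 y == 0]| = (3 ^ h * 3 ^ h)%N].
Proof.
have e0 : (0 < 3 ^ h)%N by rewrite expn_gt0.
have [hK _] := K_T_card H3 h0 cardF.
case: (boolP (c ^+ 2 == 1)) => hc.
  have : (c - 1) * (c + 1) == 0 by rewrite -subr_eq0 in hc; rewrite -subr_sqr expr1n.
  rewrite mulf_eq0 subr_eq0 addr_eq0 => /orP [/eqP ->|/eqP ->].
    constructor 1; rewrite (_ : [set y | _] = [set 0]) ?cards1 //.
    apply/setP => y; rewrite !inE; apply/eqP/eqP => [/ker_11 -> //|->].
    exact: Lf0.
  by constructor 3; exact: ker_m1.
have hc' : 1 - c ^+ 2 != 0 by rewrite subr_eq0 eq_sym.
case: (boolP (#|[set y | Lf (3 ^ h) c 1 y == 0]| == 1%N)) => [/eqP|hr]; first by constructor 1.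
have [y y0 hy] := ker_one (Lf0 e0 c 1) hr.
constructor 2; rewrite (ker_c1 H3 h0 cardF hc' y0 hy) card_imset ?hK //.
exact: mulIf.
Qed.

Lemma four_lines (F : finFieldType) (H3 : 3 \in [pchar F]) (a c : F) :
  [\/ a = 0, a = 1 | a = -1] -> [\/ c = 0, c = 1 | c = -1] ->
  ((a == 0%R) + (c == 0%R) + (a + c == 0)%R + (a - c == 0)%R = 1 + 3 * ((a == 0%R) && (c == 0%R)))%N.
Proof.
have [n01 [n0m [n10 [nm0 [n1m nm1]]]]] := neq01 H3.
have e11 : (1 + 1 : F) = -1 := one_one H3.
have em : (-1 + -1 : F) = 1 by rewrite -opprD e11 opprK.
have e1m : (1 - -1 : F) = -1 by rewrite opprK e11.
have em1 : (-1 - 1 : F) = 1 by rewrite -opprD e11 opprK.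
have emm : (-1 - -1 : F) = 0 by rewrite subrr.
by case=> ->; case=> ->; rewrite ?addr0 ?add0r ?subr0 ?sub0r ?subrr ?addNr ?e11 ?em ?e1m ?em1
  ?oppr0 ?opprK ?eqxx ?n10 ?nm0 ?oppr_eq0 ?n10 /=.
Qed.

Lemma main_arith (N P Pm2 A : nat) (X3 X4 : int) :
  (P = 9 * Pm2)%N ->
  ((9 * N)%:Z = P%:Z + X3 + X4)%R ->
  (X3 = 0 \/ X3 = (2 * (9 * A))%:Z \/ X3 = - (2 * (9 * A))%:Z)%R ->
  (X4 = 0 \/ X4 = (2 * (9 * A))%:Z \/ X4 = - (2 * (9 * A))%:Z)%R ->
  (X3 = 0 \/ X4 = 0)%R ->
  [\/ N = Pm2, N = (Pm2 + 2 * A)%N | N = (Pm2 - 2 * A)%N].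
Proof.
move=> hP hN h3 h4 h34.
case: h34 => [z3|z4].
- rewrite z3 in hN; case: h4 => [z4|[z4|z4]]; rewrite z4 in hN.
  + by constructor 1; lia.
  + by constructor 2; lia.
  + by constructor 3; lia.
- rewrite z4 in hN; case: h3 => [z3|[z3|z3]]; rewrite z3 in hN.
  + by constructor 1; lia.
  + by constructor 2; lia.
  + by constructor 3; lia.
Qed.

Unset Implicit Arguments.

Theorem mainTheorem14 (F : finFieldType) (h : nat) (h_odd : odd h)
    (cardF : #|F| = (3 ^ (3 * h))%N) (b : F) (b_nz : b != 0) :
  let m := (3 * h)%N in
  let e := (3 ^ h)%N in
  let N := #|[set y : F | (Tr3 m (y ^+ e.+1 + y ^+ 2) == 0)
                          && (Tr3 m (b * y ^+ e.+1) == 0)]| in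
  [\/ N = (3 ^ (m - 2))%N,
      N = (3 ^ (m - 2) + 2 * 3 ^ (2 * (h - 1)))%N
    | N = (3 ^ (m - 2) - 2 * 3 ^ (2 * (h - 1)))%N].
Proof.
move=> m e N.
have h0 : (0 < h)%N by case: h h_odd {cardF m e N}.
have H3 : 3 \in [pchar F] by apply: (card_finPcharP cardF).
have m0 : (0 < m)%N by rewrite /m muln_gt0 h0.
have e0 : (0 < e)%N by rewrite expn_gt0.
pose Q1 : F -> F := Qf m e 1 1; pose Q2 : F -> F := Qf m e b 0.
pose Q3 : F -> F := Qf m e (1 + b) 1; pose Q4 : F -> F := Qf m e (1 - b) 1.
have hQ1 : forall y, Q1 y = Tr3 m (y ^+ e.+1 + y ^+ 2) by move=> y; rewrite /Q1 /Qf !mul1r.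
have hQ2 : forall y, Q2 y = Tr3 m (b * y ^+ e.+1) by move=> y; rewrite /Q2 /Qf mul0r addr0.
have hQ3 : forall y, Q3 y = Q1 y + Q2 y.
  by move=> y; rewrite /Q3 /Q1 /Q2 /Qf -TrD //; congr Tr3; ring.
have hQ4 : forall y, Q4 y = Q1 y - Q2 y.
  by move=> y; rewrite /Q4 /Q1 /Q2 /Qf -TrN // -TrD //; congr Tr3; ring.
have hv : forall (c u : F) y, [\/ Qf m e c u y = 0, Qf m e c u y = 1 | Qf m e c u y = -1].
  by move=> c u y; exact: Tr_val.
have count : (3 * N + 3 ^ m = #|[set y | Q1 y == 0%R]| + #|[set y | Q2 y == 0%R]|
     + #|[set y | Q3 y == 0%R]| + #|[set y | Q4 y == 0%R]|)%N.
  have -> : N = #|[set y | (Q1 y == 0%R) && (Q2 y == 0%R)]|.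
    by apply: eq_card => y; rewrite !inE hQ1 hQ2.
  have -> : (3 ^ m = \sum_(y : F) 1)%N by rewrite sum1_card cardF.
  rewrite !card_sum big_distrr /= -!big_split /=; apply: eq_bigr => y _.
  by rewrite hQ3 hQ4 (four_lines H3 (hv 1 1 y) (hv b 0 y)) addnC.
have QF : forall c u : F, (3 * #|[set y | Qf m e c u y == 0%R]| = 3 ^ m)%N \/
    (((3 * #|[set y | Qf m e c u y == 0%R]|)%:Z - (3 ^ m)%:Z) ^+ 2
     = (4 * 3 ^ m * #|[set y | Lf e c u y == 0%R]|)%:Z)%R.
  move=> c u; have [hv' hB hN] := Qf_hyps H3 cardF c u.
  exact: (qform H3 cardF m0 hv' hB hN).
have XC : forall c u : F,
    [\/ #|[set y | Lf e c u y == 0%R]| = 1%N, #|[set y | Lf e c u y == 0%R]| = (3 ^ h)%N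
      | #|[set y | Lf e c u y == 0%R]| = (3 ^ h * 3 ^ h)%N] ->
    (((3 * #|[set y | Qf m e c u y == 0%R]|)%:Z - (3 ^ m)%:Z) = 0)%R \/
    (#|[set y | Lf e c u y == 0%R]| = (3 ^ h)%N /\
     (((3 * #|[set y | Qf m e c u y == 0%R]|)%:Z - (3 ^ m)%:Z) = (2 * 3 ^ (2 * h))%:Z \/
      ((3 * #|[set y | Qf m e c u y == 0%R]|)%:Z - (3 ^ m)%:Z) = - (2 * 3 ^ (2 * h))%:Z)%R).
  move=> c u hr; apply: X_cases => //.
  case: (QF c u) => [hq|hq]; last by right.
  by left; rewrite hq subrr.
have r1 : #|[set y : F | Lf e 1 1 y == 0%R]| = 1%N.
  rewrite -(cards1 (0 : F)). apply: eq_card => y; rewrite !inE; apply/eqP/eqP => [/(ker_11 H3 h0 cardF) -> //|->].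
  exact: Lf0.
have r2 : #|[set y | Lf e b 0 y == 0%R]| = 1%N.
  rewrite -(cards1 (0 : F)); apply: eq_card => y; rewrite !inE; apply/eqP/eqP => [/(ker_b0 H3 h0 cardF b_nz) -> //|->].
  exact: Lf0.
have he1 : (3 ^ h)%N != 1%N by rewrite -(expn0 3) eqn_exp2l // -lt0n.
have X1 : ((3 * #|[set y | Q1 y == 0%R]|)%:Z - (3 ^ m)%:Z = 0)%R.
  case: (XC 1 1); first by constructor 1.
    by [].
  by rewrite r1 => -[/esym/eqP]; rewrite (negbTE he1).
have X2 : ((3 * #|[set y | Q2 y == 0%R]|)%:Z - (3 ^ m)%:Z = 0)%R.
  case: (XC b 0); first by constructor 1.
    by [].
  by rewrite r2 => -[/esym/eqP]; rewrite (negbTE he1).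
have X3 := XC (1 + b) 1 (ker_cases H3 h0 cardF (1 + b)).
have X4 := XC (1 - b) 1 (ker_cases H3 h0 cardF (1 - b)).
have hm2 : (3 ^ m = 9 * 3 ^ (m - 2))%N.
  have hm : (m = (m - 2) + 2)%N by rewrite /m; lia.
  by rewrite {1}hm expnD mulnC.
have hA : (3 ^ (2 * h) = 9 * 3 ^ (2 * (h - 1)))%N.
  have hh : (2 * h = 2 * (h - 1) + 2)%N by lia.
  by rewrite hh expnD mulnC.
apply: (main_arith (P := (3 ^ m)%N) (X3 := ((3 * #|[set y | Q3 y == 0%R]|)%:Z - (3 ^ m)%:Z)%R)
                   (X4 := ((3 * #|[set y | Q4 y == 0%R]|)%:Z - (3 ^ m)%:Z)%R)) => //.
- move: X1 X2; lia.
- case: X3 => [->|[_ [->|->]]]; rewrite ?hA; [by left|by right; left|by right; right].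
- case: X4 => [->|[_ [->|->]]]; rewrite ?hA; [by left|by right; left|by right; right].
- case: X3 => [|[r3 _]]; first by left.
  case: X4 => [|[r4 _]]; first by right.
  exfalso.
  have n3 : #|[set y | Lf e (1 + b) 1 y == 0%R]| != 1%N by rewrite r3.
  have n4 : #|[set y | Lf e (1 - b) 1 y == 0%R]| != 1%N by rewrite r4.
  have [y y0 hy] := ker_one (Lf0 e0 (1 + b) 1) n3.
  have [y' y'0 hy'] := ker_one (Lf0 e0 (1 - b) 1) n4.
  exact: (not_both H3 h_odd cardF y0 y'0 hy hy').
Qed.
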